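(* Let $\mathscr{A}$ be a $C^*$-algebra with identity such that the set $\mathscr{A}'_m$ of all linear multiplicative functionals $\varphi\colon\mathscr{A}\to\mathbb{C}$ is total (i.e., if $\varphi(a)=0$ for all $\varphi\in\mathscr{A}'_m$ then $a=0$). Let $\mathscr{X}$ be a right $\mathscr{A}$-module which is also a normed space. Let $E, F\colon \mathscr{X}^2\to\mathscr{A}$ be multi-$\mathscr{A}$-linear functions, and assume that $E$ is bounded and strong. Then the following are equivalent: (i) for all $x,y\in\mathscr{X}$, $E(x,y)=0$ implies $F(x,y)=0$; (ii) there exists $c\in\mathscr{A}$ such that $F(x,y)=cE(x,y)$ for all $x,y\in\mathscr{X}$. Moreover, each of these conditions implies that $F$ is bounded.
   Context: A right $\mathscr{A}$-module $\mathscr{X}$ is a complex vector space with a right $\mathscr{A}$-action satisfying $(\alpha x)a=x(\alpha a)=\alpha(xa)$. A function $F\colon\mathscr{X}^n\to\mathscr{A}$ is multi-$\mathscr{A}$-linear if for all $x_1,\dots,x_n,y_j\in\mathscr{X}$, $\alpha\in\mathbb{C}$, $a\in\mathscr{A}$ and $j=1,\dots,n$: (A) $F$ is additive in the $j$-th variable; (B) $F(x_1,\dots,\alpha x_j a,\dots,x_n)=\alpha F(x_1,\dots,x_n)a$ if $j$ is even; (C) $F(x_1,\dots,\alpha x_j a,\dots,x_n)=\overline{\alpha}a^*F(x_1,\dots,x_n)$ if $j$ is odd. $F$ is bounded if there is $M$ with $\|F(x_1,\dots,x_n)\|\le M\|x_1\|\cdots\|x_n\|$ for all $x_i$. With $G_{\mathscr{A}}$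 the set of invertible elements of $\mathscr{A}$, $F$ is strong if there exists $w\in\mathscr{X}$ with $F(w,w,\dots,w)\in G_{\mathscr{A}}$. *)

(* Defs.v *)
From HB Require Import structures.
From mathcomp Require Import all_boot all_order all_algebra.
From mathcomp Require Import reals.
From mathcomp Require Import complex.
Set Implicit Arguments. Unset Strict Implicit. Unset Printing Implicit Defensive.
Import Order.TTheory GRing.Theory Num.Theory.
Local Open Scope ring_scope.
Local Open Scope complex_scope.

Section Defs.
Variable R : realType.
Local Notation C := (R[i]).

Record normed_space_axioms (V : lmodType C) (nrm : V -> R) : Prop := {
  ns_ge0 : forall v, 0 <= nrm v;
  ns_eq0 : forall v, nrm v = 0 -> v = 0;
  ns_triangle : forall v w, nrm (v + w) <= nrm v + nrm w;
  ns_scale : forall (al : C) v, (nrm (al *: v))%:C = `|al| * (nrm v)%:C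
}.

Definition complete_wrt (V : lmodType C) (nrm : V -> R) : Prop :=
  forall u : nat -> V,
    (forall e : R, 0 < e -> exists N : nat, forall m n : nat,
        (N <= m)%N -> (N <= n)%N -> nrm (u m - u n) < e) ->
    exists l : V, forall e : R, 0 < e -> exists N : nat, forall n : nat,
        (N <= n)%N -> nrm (u n - l) < e.

Record Cstar_algebra_axioms (A : algType C) (nrm : A -> R) (star : A -> A) : Prop := {
  cs_normed : normed_space_axioms nrm;
  cs_complete : complete_wrt nrm;
  cs_submult : forall a b, nrm (a * b) <= nrm a * nrm b;
  cs_starD : forall a b, star (a + b) = star a + star b;
  cs_starZ : forall (al : C) a, star (al *: a) = (al^*)%R *: star a;
  cs_starM : forall a b, star (a * b) = star b * star a;
  cs_starK : forall a, star (star a) = a;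
  cs_Cstar : forall a, nrm (star a * a) = nrm a ^+ 2
}.

Definition lin_mult_functional (A : algType C) (phi : A -> C) : Prop :=
  [/\ forall a b, phi (a + b) = phi a + phi b,
      forall (al : C) a, phi (al *: a) = al * phi a
    & forall a b, phi (a * b) = phi a * phi b].

Definition mult_functionals_total (A : algType C) : Prop :=
  forall a : A, (forall phi : A -> C, lin_mult_functional phi -> phi a = 0) -> a = 0.

Record right_module_axioms (A : algType C) (X : lmodType C) (ract : X -> A -> X) : Prop := {
  rm_addl : forall x y a, ract (x + y) a = ract x a + ract y a;
  rm_addr : forall x a b, ract x (a + b) = ract x a + ract x b;
  rm_mul : forall x a b, ract x (a * b) = ract (ract x a) b;
  rm_one : forall x, ract x 1 = x;
  rm_scalel : forall (al : C) x a, ract (al *: x) a = al *: ract x a;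
  rm_scaler : forall (al : C) x a, ract x (al *: a) = al *: ract x a
}.

(* Multi-A-linearity for n = 2 (variable 1 odd, variable 2 even). *)
Definition multiAlinear2 (A : algType C) (X : lmodType C) (ract : X -> A -> X)
    (star : A -> A) (F : X -> X -> A) : Prop :=
  [/\ forall x x' y, F (x + x') y = F x y + F x' y,
      forall x y y', F x (y + y') = F x y + F x y',
      forall (al : C) (a : A) x y, F (ract (al *: x) a) y = (al^*)%R *: (star a * F x y)
    & forall (al : C) (a : A) x y, F x (ract (al *: y) a) = al *: (F x y * a)].

Definition bounded2 (A : algType C) (X : lmodType C) (nA : A -> R) (nX : X -> R)
    (F : X -> X -> A) : Prop :=
  exists M : R, forall x y, nA (F x y) <= M * nX x * nX y.

Definition invertible (A : algType C) (a : A) : Prop :=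
  exists b : A, a * b = 1 /\ b * a = 1.

Definition strong2 (A : algType C) (X : lmodType C) (F : X -> X -> A) : Prop :=
  exists w : X, invertible (F w w).

End Defs.

(* Main.v *)
Require Import Defs.
From HB Require Import structures.
From mathcomp Require Import all_boot all_order all_algebra.
From mathcomp Require Import reals.
From mathcomp Require Import complex.
Import Order.TTheory GRing.Theory Num.Theory.
Local Open Scope ring_scope.

Theorem theorem3p5 (R : realType) (A : algType R[i]) (nA : A -> R) (star : A -> A)
  (X : lmodType R[i]) (nX : X -> R) (ract : X -> A -> X) (E F : X -> X -> A) :
  Cstar_algebra_axioms nA star ->
  mult_functionals_total A ->
  right_module_axioms ract ->
  normed_space_axioms nX ->
  multiAlinear2 ract star E ->
  multiAlinear2 ract star F ->
  bounded2 nA nX E ->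
  strong2 E ->
  ((forall x y, E x y = 0 -> F x y = 0) <->
     (exists c : A, forall x y, F x y = c * E x y))
  /\ ((forall x y, E x y = 0 -> F x y = 0) -> bounded2 nA nX F)
  /\ ((exists c : A, forall x y, F x y = c * E x y) -> bounded2 nA nX F).
Proof.
move=> HC Htot Hrm HnX [EaddL EaddR EscL EscR] [FaddL FaddR FscL FscR] [M HM]
  [w [ei [Hei1 Hei2]]].
have comm : forall a b : A, a * b = b * a.
  move=> a b; apply/eqP; rewrite -subr_eq0; apply/eqP; apply: Htot => phi [pD pZ pM].
  have pN : forall u, phi (- u) = - phi u by move=> u; rewrite -scaleN1r pZ mulN1r.
  by rewrite pD pN !pM mulrC subrr.
have EL : forall x y a, E (ract x a) y = star a * E x y.
  by move=> x y a; have := EscL 1 a x y; rewrite scale1r conjC1 scale1r.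
have FL : forall x y a, F (ract x a) y = star a * F x y.
  by move=> x y a; have := FscL 1 a x y; rewrite scale1r conjC1 scale1r.
have ER : forall x y a, E x (ract y a) = E x y * a.
  by move=> x y a; have := EscR 1 a x y; rewrite !scale1r.
have FR : forall x y a, F x (ract y a) = F x y * a.
  by move=> x y a; have := FscR 1 a x y; rewrite !scale1r.
have starK := cs_starK HC.
have i2ii : (forall x y, E x y = 0 -> F x y = 0) ->
    exists c : A, forall x y, F x y = c * E x y.
  move=> Hi; exists (ei * F w w).
  have Hz : forall z, E z w = 1 -> forall y, F z y = ei * F w w * E z y.
    move=> z Hz y.
    have Fzw : F z w = ei * F w w.
      have H0 : E (z + ract w (star (- ei))) w = 0.
        by rewrite EaddL EL starK Hz mulNr Hei2 subrr.
      have := FaddL z (ract w (star (-ei))) w.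
      rewrite FL starK (Hi _ _ H0) mulNr => /esym/eqP; rewrite subr_eq0 => /eqP //.
    have H0 : E z (y + ract w (- E z y)) = 0.
      by rewrite EaddR ER Hz mul1r subrr.
    have := FaddR z y (ract w (- E z y)).
    rewrite FR (Hi _ _ H0) Fzw mulrN => /esym/eqP; rewrite subr_eq0 => /eqP //.
  have Hzv : forall z v, E z w = 1 -> forall y,
      F (ract z v) y = ei * F w w * E (ract z v) y.
    move=> z v Hz1 y; rewrite FL EL (Hz _ Hz1) mulrA [star v * _]comm -mulrA //.
  set z1 := ract w (star ei).
  have Hz1 : E z1 w = 1 by rewrite /z1 EL starK.
  move=> x y.
  set v := star (1 - E x w).
  have Hx0 : E (x + ract z1 v) w = 1.
    by rewrite EaddL EL /v starK Hz1 mulr1 addrC subrK.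
  have eF := FaddL x (ract z1 v) y.
  have eE := EaddL x (ract z1 v) y.
  rewrite (Hz _ Hx0) (Hzv _ _ Hz1) eE mulrDr in eF.
  by move/addIr: eF => <-.
have bnd : (exists c : A, forall x y, F x y = c * E x y) -> bounded2 nA nX F.
  move=> [c Hc]; exists (nA c * M) => x y; rewrite Hc.
  apply: le_trans (cs_submult HC _ _) _.
  rewrite -!mulrA; apply: ler_wpM2l; first exact: (ns_ge0 (cs_normed HC) c).
  by rewrite mulrA; apply: HM.
split; [split|split].
- exact: i2ii.
- by move=> [c Hc] x y H; rewrite Hc H mulr0.
- by move/i2ii; apply: bnd.
- exact: bnd.
Qed.
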